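(* A real number $\beta>1$ is a well-posed Salem number of degree 6 if and only if $\beta$ is the dominant root of a polynomial in $\mathbb Z[x]$ of the form $P(x)=x^6-ax^{5}-bx^{4}-cx^{3}-bx^{2}-ax+1$ (with $a,b,c\in\mathbb Z$) satisfying the following conditions: (1) $2-2b<2a+c$; (2) $c<2a$; (3) $|b+2|<c-a$.
   Context: A Salem number is an algebraic integer $>1$ all of whose conjugates have modulus not greater than one, with at least one conjugate of modulus one. For a sextic Salem number $\beta$ with minimal polynomial $P(x)=x^6-ax^{5}-bx^{4}-cx^{3}-bx^{2}-ax+1$, its trace polynomial is $Q(y)=y^3-ay^2-(b+3)y-(c-2a)=(y-\gamma)(y-\alpha_1)(y-\alpha_2)$, obtained by writing $P(x)/x^3=Q(y)$ with $y=x+x^{-1}$ (so $\gamma=\beta+1/\beta$). The Salem number $\beta$ is called well-posed if its trace polynomial $Q(y)$ has three roots $\gamma,\alpha_1,\alpha_2$ such that $-1<\alpha_1<0<\alpha_2<1<2<\gamma$. *)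

(* Defs.v *)
From HB Require Import structures.
From mathcomp Require Import all_boot all_order all_algebra.
From mathcomp Require Import complex.
From mathcomp Require Import reals.
Set Implicit Arguments. Unset Strict Implicit. Unset Printing Implicit Defensive.
Import Order.TTheory GRing.Theory Num.Theory.
Local Open Scope ring_scope.

Definition polyC_of (R : realType) (P : {poly int}) : {poly R[i]} :=
  map_poly (fun z : int => z%:~R) P.

Definition polyR_of (R : realType) (P : {poly int}) : {poly R} :=
  map_poly (fun z : int => z%:~R) P.

Definition is_min_poly_int (R : realType) (P : {poly int}) (beta : R) : Prop :=
  [/\ P \is monic,
      irreducible_poly (map_poly (fun z : int => z%:~R) P : {poly rat})
    & root (polyR_of R P) beta].

(* The conjugates of beta are the complex roots of its minimal polynomial. *)
Definition salem (R : realType) (beta : R) : Prop :=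
  1 < beta /\
  exists P : {poly int},
    [/\ is_min_poly_int P beta,
        (forall z : R[i], root (polyC_of R P) z -> z != (beta%:C)%C -> `|z| <= 1)
      & (exists z : R[i], root (polyC_of R P) z /\ `|z| = 1)].

Definition sextP (a b c : int) : {poly int} :=
  'X^6 - a%:P * 'X^5 - b%:P * 'X^4 - c%:P * 'X^3 - b%:P * 'X^2 - a%:P * 'X + 1.

Definition traceQ (a b c : int) : {poly int} :=
  'X^3 - a%:P * 'X^2 - (b + 3)%:P * 'X - (c - 2 * a)%:P.

Definition well_posed_salem6 (R : realType) (beta : R) : Prop :=
  salem beta /\
  exists a b c : int,
    is_min_poly_int (sextP a b c) beta /\
    exists alpha1 alpha2 gamma : R,
      [/\ gamma = beta + beta^-1,
          root (polyR_of R (traceQ a b c)) gamma,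
          root (polyR_of R (traceQ a b c)) alpha1,
          root (polyR_of R (traceQ a b c)) alpha2
        & [/\ -1 < alpha1, alpha1 < 0, 0 < alpha2, alpha2 < 1 & 2 < gamma]].

Definition dominant_root (R : realType) (P : {poly int}) (beta : R) : Prop :=
  root (polyR_of R P) beta /\
  forall z : R[i], root (polyC_of R P) z -> `|z| <= `|(beta%:C)%C|.

(* Main.v *)
Require Import Defs.
From HB Require Import structures.
From mathcomp Require Import all_boot all_order all_algebra.
From mathcomp Require Import complex polyrcf.
From mathcomp Require Import reals.
From mathcomp Require Import ring lra zify.
Import Order.TTheory GRing.Theory Num.Theory.
Local Open Scope ring_scope.

Lemma sextP_eval (F : fieldType) (a b c : int) (x : F) : x != 0 ->
  (map_poly (fun z : int => z%:~R) (sextP a b c)).[x] =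
  x ^+ 3 * (map_poly (fun z : int => z%:~R) (traceQ a b c)).[x + x^-1].
Proof.
move=> x0; rewrite /sextP /traceQ !(rmorphB, rmorphD, rmorphM, map_polyX, map_polyC, map_polyXn, rmorph1) /=.
rewrite !hornerE /= !map_polyX !map_polyC !hornerE /=. by field. Qed.


Lemma size_traceQ a b c : size (traceQ a b c) = 4%N.
Proof.
apply/eqP; rewrite eqn_leq; apply/andP; split.
  apply/leq_sizeP => j hj; rewrite /traceQ !coefE.
  by case: j hj => [|[|[|[|j]]]] //= _; rewrite !mulr0 !subr0.
rewrite ltnNge; apply/negP => /leq_sizeP/(_ 3%N (leqnn _)); rewrite /traceQ !coefE /=.
by rewrite !mulr0 !subr0; apply/eqP; rewrite oner_neq0.
Qed.

Lemma size_sextP a b c : size (sextP a b c) = 7%N.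
Proof.
apply/eqP; rewrite eqn_leq; apply/andP; split.
  apply/leq_sizeP => j hj; rewrite /sextP !coefE.
  by case: j hj => [|[|[|[|[|[|[|j]]]]]]] //= _; rewrite !mulr0 !subr0 ?addr0.
rewrite ltnNge; apply/negP => /leq_sizeP/(_ 6%N (leqnn _)); rewrite /sextP !coefE /=.
by rewrite !mulr0 !subr0 ?addr0; apply/eqP; rewrite oner_neq0.
Qed.

Lemma monic_traceQ a b c : traceQ a b c \is monic.
Proof.
rewrite monicE /lead_coef size_traceQ /traceQ !coefE /=.
by rewrite !mulr0 !subr0.
Qed.

Lemma monic_sextP a b c : sextP a b c \is monic.
Proof.
rewrite monicE /lead_coef size_sextP /sextP !coefE /=.
by rewrite !mulr0 !subr0 ?addr0.
Qed.

Lemma monic_cubic_fact (F : fieldType) (p : {poly F}) (g x1 x2 : F) :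
  p \is monic -> size p = 4%N -> uniq [:: g; x1; x2] ->
  all (root p) [:: g; x1; x2] ->
  p = ('X - g%:P) * ('X - x1%:P) * ('X - x2%:P).
Proof.
move=> pm ps hu hr.
have hu' : poly.uniq_roots [:: g; x1; x2] by rewrite uniq_rootsE.
have hd := uniq_roots_dvdp hr hu'.
have := dvdp_size_eqp hd; rewrite size_prod_XsubC ps /= eqxx.
rewrite eqp_monic ?monic_prod_XsubC // => /esym/eqP <-.
by rewrite !big_cons big_nil mulr1 mulrA.
Qed.

Lemma map_traceQ_monic (F : fieldType) a b c :
  map_poly (fun z : int => z%:~R : F) (traceQ a b c) \is monic.
Proof. by apply: monic_map; exact: monic_traceQ. Qed.

Lemma quad_complex (R : rcfType) (x u v : R) :
  ((u +i* v) ^+ 2 - x%:C * (u +i* v) + 1 = 0)%C ->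
  u^+2 - v^+2 - x*u + 1 = 0 /\ 2*u*v - x*v = 0.
Proof.
move=> /(congr1 (fun z => (@complex.Re R z, @complex.Im R z))) /= [h1 h2].
by split; [rewrite -h1|rewrite -h2]; ring.
Qed.

Lemma polyC_of_real (R : realType) (P : {poly int}) :
  polyC_of R P = map_poly (real_complex R) (polyR_of R P).
Proof.
rewrite /polyC_of /polyR_of -map_poly_comp; apply: eq_map_poly => z /=.
by rewrite rmorph_int.
Qed.

Lemma polyC_of_horner (R : realType) (P : {poly int}) (x : R) :
  (polyC_of R P).[x%:C%C] = ((polyR_of R P).[x])%:C%C.
Proof. by rewrite polyC_of_real horner_map. Qed.

Lemma sextP_at0 (F : fieldType) a b c :
  (map_poly (fun z : int => z%:~R : F) (sextP a b c)).[0] = 1.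
Proof.
rewrite horner_coef0 coef_map /sextP !coefE /=.
by rewrite !mulr0 !subr0 add0r.
Qed.
Lemma P_roots (R : realType) a b c (be al1 al2 : R) :
  1 < be -> -2 < al1 -> al1 < 2 -> -2 < al2 -> al2 < 2 ->
  polyR_of R (traceQ a b c) = ('X - (be + be^-1)%:P) * ('X - al1%:P) * ('X - al2%:P) ->
  forall z : R[i], root (polyC_of R (sextP a b c)) z ->
  [\/ z = be%:C%C, z = (be^-1)%:C%C | `|z| = 1].
Proof.
move=> hb h11 h12 h21 h22 hQ z hz.
have z0 : z != 0.
  apply/negP => /eqP h; move: hz; by rewrite h /root /polyC_of sextP_at0 oner_eq0.
move: hz; rewrite /root /polyC_of sextP_eval // mulf_eq0 expf_eq0 /= (negbTE z0) /=.
rewrite -/(polyC_of R _) polyC_of_real hQ.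
rewrite !rmorphM !rmorphB /= !map_polyX !map_polyC /= !hornerE /=.
have hw : forall x : R, z + z^-1 = x%:C%C -> ((z ^+ 2 - x%:C * z + 1 = 0)%C).
  move=> x hx; rewrite -hx mulrDl mulVf // expr2; ring.
rewrite !mulf_eq0 !subr_eq0 -orbA => /or3P[] /eqP /hw; case: z z0 {hw} => u v z0 /quad_complex [e1 e2].
- have hi : be * be^-1 = 1 by rewrite mulfV // gt_eqF // (lt_trans ltr01 hb).
  have hi0 : 0 < be^-1 by rewrite invr_gt0 (lt_trans ltr01 hb).
  have hg : 2 < be + be^-1 by nra.
  have v0 : v = 0.
    case: (eqVneq v 0) => // vn.
    have /eqP : (2 * u - (be + be^-1)) * v = 0 by rewrite -e2; ring.
    rewrite mulf_eq0 (negbTE vn) orbF => /eqP hu.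
    exfalso; nra.
  subst v.
  have /eqP : (u - be) * (u - be^-1) = 0.
    rewrite -e1; have -> : (u - be) * (u - be^-1) = u ^+ 2 - (be + be^-1) * u + be * be^-1 by ring.
    rewrite hi; ring.
  rewrite mulf_eq0 !subr_eq0 => /orP[] /eqP ->; [exact: Or31 | exact: Or32].
- apply: Or33; rewrite normc_def /=.
  have vn : v != 0.
    apply/eqP => v0; subst v; move: e1; rewrite expr0n /= subr0 => e1.
    have h4 : 0 < (2 - al1) * (2 + al1) by apply: mulr_gt0; lra.
    have h5 := sqr_ge0 (2 * u - al1). nra.
  have /eqP : (2 * u - al1) * v = 0 by rewrite -e2; ring.
  rewrite mulf_eq0 (negbTE vn) orbF => /eqP hu.
  have hal : al1 = 2 * u by apply/eqP; rewrite eq_sym -subr_eq0 hu.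
  rewrite hal in e1.
  have -> : u ^+ 2 + v ^+ 2 = 1 - (u ^+ 2 - v ^+ 2 - 2 * u * u + 1) by ring.
  rewrite e1 subr0.
  by rewrite sqrtr1.
- apply: Or33; rewrite normc_def /=.
  have vn : v != 0.
    apply/eqP => v0; subst v; move: e1; rewrite expr0n /= subr0 => e1.
    have h4 : 0 < (2 - al2) * (2 + al2) by apply: mulr_gt0; lra.
    have h5 := sqr_ge0 (2 * u - al2). nra.
  have /eqP : (2 * u - al2) * v = 0 by rewrite -e2; ring.
  rewrite mulf_eq0 (negbTE vn) orbF => /eqP hu.
  have hal : al2 = 2 * u by apply/eqP; rewrite eq_sym -subr_eq0 hu.
  rewrite hal in e1.
  have -> : u ^+ 2 + v ^+ 2 = 1 - (u ^+ 2 - v ^+ 2 - 2 * u * u + 1) by ring.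
  rewrite e1 subr0.
  by rewrite sqrtr1.
Qed.

Lemma traceQ_evalR (R : realType) a b c (t : R) :
  (polyR_of R (traceQ a b c)).[t] =
  t ^+ 3 - a%:~R * t ^+ 2 - (b%:~R + 3) * t - (c%:~R - 2 * a%:~R).
Proof.
rewrite /polyR_of /traceQ !(rmorphB, rmorphD, rmorphM, map_polyX, map_polyC, map_polyXn) /=.
rewrite !hornerE /= !map_polyX !map_polyC !hornerE /=.
rewrite !rmorph1; ring.
Qed.

Lemma conds_from_roots (R : realType) a b c (g x1 x2 : R) :
  polyR_of R (traceQ a b c) = ('X - g%:P) * ('X - x1%:P) * ('X - x2%:P) ->
  -1 < x1 -> x1 < 0 -> 0 < x2 -> x2 < 1 -> 2 < g ->
  [/\ 2 - 2 * b < 2 * a + c, c < 2 * a & `|b + 2| < c - a].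
Proof.
move=> hQ h1 h2 h3 h4 h5.
have ev : forall t, (t - g) * (t - x1) * (t - x2) =
    t ^+ 3 - a%:~R * t ^+ 2 - (b%:~R + 3) * t - (c%:~R - 2 * a%:~R).
  by move=> t; rewrite -traceQ_evalR hQ !hornerE.
have e2 := ev 2; have e0 := ev 0; have e1 := ev 1; have em := ev (-1).
have p2 : 0 < (2 - x1) * (2 - x2) by apply: mulr_gt0; lra.
have q0 : 0 < - x1 * x2 by apply: mulr_gt0; lra.
have p0 : 0 < (- x1 * x2) * g by apply: mulr_gt0; lra.
have p1 : 0 < (1 - x1) * (1 - x2) by apply: mulr_gt0; lra.
have pm : 0 < (1 + x1) * (1 + x2) by apply: mulr_gt0; lra.
split.
- rewrite -(ltr_int R) !(rmorphB, rmorphD, rmorphM) /=. nra.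
- rewrite -(ltr_int R) !(rmorphB, rmorphD, rmorphM) /=. nra.
- rewrite ltr_norml; apply/andP; split; rewrite -(ltr_int R) !(rmorphB, rmorphD, rmorphM, rmorphN) /=; nra.
Qed.

Lemma traceQ_evalF (F : fieldType) a b c (t : F) :
  (map_poly (fun z : int => z%:~R : F) (traceQ a b c)).[t] =
  t ^+ 3 - a%:~R * t ^+ 2 - (b%:~R + 3) * t - (c%:~R - 2 * a%:~R).
Proof.
rewrite /traceQ !(rmorphB, rmorphD, rmorphM, map_polyX, map_polyC, map_polyXn) /=.
rewrite !hornerE /= !map_polyX !map_polyC !hornerE /=.
rewrite !rmorph1; ring.
Qed.

Lemma rat_root_int a b c (r : rat) :
  (map_poly (fun z : int => z%:~R : rat) (traceQ a b c)).[r] = 0 ->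
  r = (numq r)%:~R.
Proof.
rewrite traceQ_evalF => hr.
have hd := denq_gt0 r.
have hn := numqE r.
set n := numq r in hn *; set d := denq r in hd hn *.
have e : (n ^+ 3 - d * (a * n ^+ 2 + (b + 3) * n * d + (c - 2 * a) * d ^+ 2))%:~R = 0 :> rat.
  rewrite !(rmorphB, rmorphD, rmorphM, rmorphXn) /= hn.
  have -> : 0 = (d%:~R) ^+ 3 * (r ^+ 3 - a%:~R * r ^+ 2 - (b%:~R + 3) * r - (c%:~R - 2 * a%:~R)) :> rat by rewrite hr mulr0.
  ring.
move/eqP: e; rewrite intr_eq0 subr_eq0 => /eqP e.
have dv : (d %| n ^+ 3 * 1)%Z by rewrite mulr1 e dvdz_mulr.
have cop : coprimez d (n ^+ 3).
  by apply: coprimezXr; rewrite coprimez_sym; exact: coprime_num_den.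
rewrite Gauss_dvdzr // dvdz1 in dv.
have d1 : d = 1.
  move: hd dv; clear; case: d => [k|k] //=; case: k => [|[|k]] //.
by rewrite hn d1 mulr1.
Qed.

Lemma size_map_traceQ (F : fieldType) a b c :
  size (map_poly (fun z : int => z%:~R : F) (traceQ a b c)) = 4%N.
Proof.
rewrite size_map_poly_id0 ?size_traceQ //.
by have /eqP -> := monic_traceQ a b c; rewrite rmorph1 oner_neq0.
Qed.

Lemma size_map_sextP (F : fieldType) a b c :
  size (map_poly (fun z : int => z%:~R : F) (sextP a b c)) = 7%N.
Proof.
rewrite size_map_poly_id0 ?size_sextP //.
by have /eqP -> := monic_sextP a b c; rewrite rmorph1 oner_neq0.
Qed.

Lemma traceQ_irr (R : realType) a b c (g x1 x2 : R) :
  polyR_of R (traceQ a b c) = ('X - g%:P) * ('X - x1%:P) * ('X - x2%:P) ->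
  -1 < x1 -> x1 < 0 -> 0 < x2 -> x2 < 1 -> 2 < g ->
  irreducible_poly (map_poly (fun z : int => z%:~R : rat) (traceQ a b c)).
Proof.
move=> hQ h1 h2 h3 h4 h5.
apply: cubic_irreducible; first by rewrite size_map_traceQ.
move=> r; apply/negP => hr.
have hrn := @rat_root_int a b c r (eqP hr).
set n := numq r in hrn.
pose k := n ^+ 3 - a * n ^+ 2 - (b + 3) * n - (c - 2 * a).
have k0 : k = 0.
  apply/eqP; rewrite -(intr_eq0 rat) /k; move/eqP: hr; rewrite traceQ_evalF hrn.
  by rewrite !(rmorphB, rmorphD, rmorphM, rmorphXn) /= => ->.
have ev : forall t, (t - g) * (t - x1) * (t - x2) =
    t ^+ 3 - a%:~R * t ^+ 2 - (b%:~R + 3) * t - (c%:~R - 2 * a%:~R).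
  by move=> t; rewrite -traceQ_evalR hQ !hornerE.
have /eqP : (n%:~R - g) * (n%:~R - x1) * (n%:~R - x2) = 0 :> R.
  rewrite ev; have : (k%:~R : R) = 0 by rewrite k0.
  by rewrite /k !(rmorphB, rmorphD, rmorphM, rmorphXn) /=.
rewrite !mulf_eq0 !subr_eq0 -orbA => /or3P[] /eqP hn.
- have e0 := ev 0; have e1 := ev 1; have em := ev (-1).
  have hs1 : g + x1 + x2 = a%:~R by nra.
  have hs2 : g * x1 + g * x2 + x1 * x2 = - (b%:~R + 3) by nra.
  have hx : x1 * x2 = (- (b + 3) - n * (a - n))%:~R.
    rewrite !(rmorphB, rmorphD, rmorphM, rmorphN) /= hn.
    have := congr1 (fun y => g * y) hs1 => /= hh.
    rewrite -hs1; nra.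
  have q1 : -1 < x1 * x2 by nra.
  have q2 : x1 * x2 < 0 by nra.
  rewrite hx in q1 q2.
  move: q1 q2; set K := (- (b + 3) - n * (a - n)) => q1 q2.
  have q1' : (-1 : int) < K by rewrite -(ltr_int R) rmorphN rmorph1.
  have q2' : K < 0 by rewrite -(ltr_int R).
  lia.
- have q1' : (-1 : int) < n by rewrite -(ltr_int R) rmorphN rmorph1 hn.
  have q2' : n < 0 by rewrite -(ltr_int R) hn.
  lia.
- have q1' : (0 : int) < n by rewrite -(ltr_int R) hn.
  have q2' : n < 1 by rewrite -(ltr_int R) hn rmorph1.
  lia.
Qed.

Lemma decomp (F : numFieldType) (q : {poly rat}) :
  exists A B : {poly rat}, forall z : F, z != 0 ->
    (map_poly ratr q).[z] =
    (map_poly ratr A).[z + z^-1] * z + (map_poly ratr B).[z + z^-1].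
Proof.
elim/poly_ind: q => [|p c [A [B IH]]].
  by exists 0, 0 => z _; rewrite !rmorph0 !horner0 mul0r addr0.
exists ('X * A + B), (c%:P - A) => z z0.
rewrite !(rmorphD, rmorphM, rmorphB, rmorphN) /= !map_polyX !map_polyC !hornerE /= IH //.
set u := (map_poly ratr A).[_]; set v := (map_poly ratr B).[_].
rewrite -/u; set r := ratr c. by field.
Qed.

Lemma map_ratr_int (F : numFieldType) (P : {poly int}) :
  map_poly (ratr : rat -> F) (map_poly (fun z : int => z%:~R : rat) P) =
  map_poly (fun z : int => z%:~R) P.
Proof. by rewrite -map_poly_comp; apply: eq_map_poly => z /=; rewrite ratr_int. Qed.

Lemma Qdiv (R : realType) a b c (Fp : {poly rat}) (x : R) :
  irreducible_poly (map_poly (fun z : int => z%:~R : rat) (traceQ a b c)) ->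
  (polyR_of R (traceQ a b c)).[x] = 0 -> (map_poly ratr Fp).[x] = 0 ->
  map_poly (fun z : int => z%:~R : rat) (traceQ a b c) %| Fp.
Proof.
move=> Qirr hx hF.
set Qq := map_poly _ (traceQ a b c) in Qirr *.
set g := gcdp Fp Qq.
have rg : root (map_poly (ratr : rat -> R) g) x.
  by rewrite gcdp_map root_gcd /Qq map_ratr_int /root -/(polyR_of R _) hx hF eqxx.
have hs : size g != 1%N.
  apply/negP => /eqP s1.
  have hg : g = (g`_0)%:P by apply: size1_polyC; rewrite s1.
  move: rg; rewrite hg map_polyC /root hornerC fmorph_eq0 => /eqP g00.
  by move: s1; rewrite hg g00 size_poly0.
have hgQ := Qirr g hs (dvdp_gcdr _ _).
by rewrite -(eqp_dvdl _ hgQ) dvdp_gcdl.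
Qed.

Lemma Qdiv_eval (R : realType) a b c (Fp : {poly rat}) (x : R) :
  map_poly (fun z : int => z%:~R : rat) (traceQ a b c) %| Fp ->
  (polyR_of R (traceQ a b c)).[x] = 0 -> (map_poly ratr Fp).[x] = 0.
Proof.
move=> /dvdpP [h ->] hx.
by rewrite rmorphM /= hornerM map_ratr_int -/(polyR_of R _) hx mulr0.
Qed.

Lemma quad_complex_rev (R : rcfType) (x u v : R) :
  u^+2 - v^+2 - x*u + 1 = 0 -> 2*u*v - x*v = 0 ->
  ((u +i* v) ^+ 2 - x%:C * (u +i* v) + 1 = 0)%C.
Proof.
move=> h1 h2; apply/eqP; rewrite eq_complex /=; apply/andP; split; apply/eqP.
  by rewrite -[X in _ = X]h1; ring.
by rewrite -[X in _ = X]h2; ring.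
Qed.

Lemma w_of_quad (F : fieldType) (z w : F) :
  z != 0 -> z ^+ 2 - w * z + 1 = 0 -> z + z^-1 = w.
Proof.
move=> z0 h.
have /eqP : z * (z + z^-1 - w) = 0.
  rewrite -[X in _ = X]h mulrBr mulrDr mulfV // expr2; ring.
by rewrite mulf_eq0 (negbTE z0) /= subr_eq0 => /eqP.
Qed.

Lemma ratrC_horner (R : realType) (A : {poly rat}) (x : R) :
  (map_poly (ratr : rat -> R[i]) A).[x%:C%C] = ((map_poly ratr A).[x])%:C%C.
Proof.
have -> : map_poly (ratr : rat -> R[i]) A = map_poly (real_complex R) (map_poly ratr A).
  by rewrite -map_poly_comp; apply: eq_map_poly => r /=; rewrite fmorph_rat.
by rewrite horner_map.
Qed.

Lemma P_root_w (R : realType) a b c (g x1 x2 : R) :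
  polyR_of R (traceQ a b c) = ('X - g%:P) * ('X - x1%:P) * ('X - x2%:P) ->
  forall z : R[i], root (polyC_of R (sextP a b c)) z ->
  z != 0 /\ exists x, [/\ x = g \/ x = x1 \/ x = x2, (polyR_of R (traceQ a b c)).[x] = 0
                     & z + z^-1 = x%:C%C].
Proof.
move=> hQ z hz.
have z0 : z != 0.
  apply/negP => /eqP h; move: hz; by rewrite h /root /polyC_of sextP_at0 oner_eq0.
split => //.
move: hz; rewrite /root /polyC_of sextP_eval // mulf_eq0 expf_eq0 /= (negbTE z0) /=.
rewrite -/(polyC_of R _) polyC_of_real hQ.
rewrite !rmorphM !rmorphB /= !map_polyX !map_polyC /= !hornerE /=.
rewrite !mulf_eq0 !subr_eq0 -orbA => /or3P[] /eqP hw.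
- by exists g; split; [left|rewrite !hornerE subrr !(mul0r, mulr0)|].
- by exists x1; split; [right;left|rewrite !hornerE subrr !(mul0r, mulr0)|].
- by exists x2; split; [right;right|rewrite !hornerE subrr !(mul0r, mulr0)|].
Qed.

Lemma root_of_w (R : realType) a b c (z : R[i]) (x : R) :
  z != 0 -> z + z^-1 = x%:C%C -> (polyR_of R (traceQ a b c)).[x] = 0 ->
  root (polyC_of R (sextP a b c)) z.
Proof.
move=> z0 hw hx; rewrite /root /polyC_of sextP_eval // -/(polyC_of R _) hw.
by rewrite polyC_of_horner hx mulr0.
Qed.

Lemma unit_root (R : realType) (x s : R) : s ^+ 2 = 1 - x ^+ 2 / 4 -> s != 0 ->
  ((x / 2 +i* s)%C != 0) /\ (x / 2 +i* s)%C + (x / 2 +i* s)%C^-1 = x%:C%C.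
Proof.
move=> hs s0.
have z0 : (x / 2 +i* s)%C != 0.
  by apply/negP => /eqP /(congr1 (@complex.Im R)) /= /eqP; rewrite (negbTE s0).
split => //; apply: w_of_quad => //; apply: quad_complex_rev.
  by rewrite hs; field.
by field.
Qed.

Lemma sqrt_data (R : realType) (x : R) : -2 < x -> x < 2 ->
  let s := Num.sqrt (1 - x ^+ 2 / 4) in s ^+ 2 = 1 - x ^+ 2 / 4 /\ 0 < s.
Proof.
move=> h1 h2 s.
have p : 0 < 1 - x ^+ 2 / 4.
  have : 0 < (2 - x) * (2 + x) by apply: mulr_gt0; lra.
  move=> h; have -> : 1 - x ^+ 2 / 4 = (2 - x) * (2 + x) / 4 by field.
  by apply: divr_gt0.
by split; [rewrite sqr_sqrtr // ltW | rewrite sqrtr_gt0].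
Qed.

Lemma sextP_irr (R : realType) a b c (be x1 x2 : R) :
  1 < be -> -1 < x1 -> x1 < 0 -> 0 < x2 -> x2 < 1 ->
  polyR_of R (traceQ a b c) = ('X - (be + be^-1)%:P) * ('X - x1%:P) * ('X - x2%:P) ->
  irreducible_poly (map_poly (fun z : int => z%:~R : rat) (sextP a b c)).
Proof.
move=> hb h1 h2 h3 h4 hQ.
set g := be + be^-1 in hQ.
have bi : be * be^-1 = 1 by rewrite mulfV // gt_eqF // (lt_trans ltr01 hb).
have bi0 : 0 < be^-1 by rewrite invr_gt0 (lt_trans ltr01 hb).
have bi1 : be^-1 < 1 by nra.
have hg : 2 < g by rewrite /g; nra.
have Qirr := @traceQ_irr R a b c g x1 x2 hQ h1 h2 h3 h4 hg.
have Qx : forall x, x = g \/ x = x1 \/ x = x2 -> (polyR_of R (traceQ a b c)).[x] = 0.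
  by move=> x [->|[->|->]]; rewrite hQ !hornerE subrr !(mul0r, mulr0).
split; first by rewrite size_map_sextP.
move=> q hs hqP.
have Pq0 : map_poly (fun z : int => z%:~R : rat) (sextP a b c) != 0.
  by rewrite -size_poly_eq0 size_map_sextP.
have q0 : q != 0.
  by apply/negP => /eqP q0; move: hqP; rewrite q0 dvd0p (negbTE Pq0).
set qC := map_poly (ratr : rat -> R[i]) q.
have [z hz] : exists z, root qC z by apply/closed_rootP; rewrite size_map_poly.
have hzP : root (polyC_of R (sextP a b c)) z.
  apply: root_dvdp hz; by rewrite /polyC_of -(map_ratr_int (R[i])) /qC dvdp_map.
have [z0 [x [hx Qx0 hw]]] := @P_root_w R a b c g x1 x2 hQ z hzP.
have [A [B hAB]] := decomp (R[i]) q.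
have e := hAB z z0; rewrite hw in e.
move: hz; rewrite /root -/qC e !ratrC_horner => /eqP eAB.
pose D := B ^+ 2 + 'X * A * B + A ^+ 2.
have hq : z ^+ 2 - x%:C%C * z + 1 = 0 by rewrite -hw mulrDl mulVf // expr2; ring.
have hD : (map_poly (ratr : rat -> R) D).[x] = 0.
  apply: (@complexI R); rewrite -ratrC_horner /D.
  rewrite !(rmorphD, rmorphM, rmorphXn) /= map_polyX !hornerE !ratrC_horner.
  set u := ((map_poly ratr A).[x])%:C%C in eAB *.
  set v := ((map_poly ratr B).[x])%:C%C in eAB *.
  have hv : v = - (u * z) by apply/eqP; rewrite -addr_eq0 addrC eAB.
  rewrite hv.
  have -> : (- (u * z)) ^+ 2 + x%:C%C * u * - (u * z) + u ^+ 2 = u ^+ 2 * (z ^+ 2 - x%:C%C * z + 1) by ring.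
  by rewrite hq mulr0.
have QD := @Qdiv R a b c D x Qirr Qx0 hD.
have x1r : x1 = g \/ x1 = x1 \/ x1 = x2 by right; left.
have D1 := @Qdiv_eval R a b c D x1 QD (Qx x1 x1r).
have [A1 B1] : (map_poly (ratr : rat -> R) A).[x1] = 0 /\ (map_poly (ratr : rat -> R) B).[x1] = 0.
  move: D1; rewrite /D !(rmorphD, rmorphM, rmorphXn) /= map_polyX !hornerE.
  set u := (map_poly ratr A).[x1]; set v := (map_poly ratr B).[x1] => h.
  have k : 0 < 1 - x1 ^+ 2 / 4 by nra.
  have hu : u = 0.
    have : (v + x1 * u / 2) ^+ 2 + (1 - x1 ^+ 2 / 4) * u ^+ 2 = 0.
      by rewrite -[X in _ = X]h; field.
    move=> hh; have h5 := sqr_ge0 (v + x1 * u / 2).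
    have h6 : (1 - x1 ^+ 2 / 4) * u ^+ 2 = 0 by nra.
    move/eqP: h6; rewrite mulf_eq0 (gt_eqF k) /= sqrf_eq0 => /eqP //.
  split => //; move: h; rewrite hu mulr0 !mul0r !addr0 => /eqP.
  by rewrite mulf_eq0 orbb => /eqP.
have QA := @Qdiv R a b c A x1 Qirr (Qx x1 x1r) A1.
have QB := @Qdiv R a b c B x1 Qirr (Qx x1 x1r) B1.
have qroot : forall rho y, rho != 0 -> (y = g \/ y = x1 \/ y = x2) ->
    rho + rho^-1 = y%:C%C -> root qC rho.
  move=> rho y r0 hy hr; rewrite /root /qC hAB // hr !ratrC_horner.
  rewrite (@Qdiv_eval R a b c A y QA (Qx y hy)) (@Qdiv_eval R a b c B y QB (Qx y hy)).
  by rewrite mul0r addr0.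
have hx1a : -2 < x1 by lra.
have hx1b : x1 < 2 by lra.
have hx2a : -2 < x2 by lra.
have hx2b : x2 < 2 by lra.
have [s1e s1p] := @sqrt_data R x1 hx1a hx1b.
have [s2e s2p] := @sqrt_data R x2 hx2a hx2b.
set s1 := Num.sqrt _ in s1e s1p.
set s2 := Num.sqrt _ in s2e s2p.
have s1e' : (- s1) ^+ 2 = 1 - x1 ^+ 2 / 4 by rewrite sqrrN.
have s2e' : (- s2) ^+ 2 = 1 - x2 ^+ 2 / 4 by rewrite sqrrN.
have ns1 : s1 != 0 by rewrite lt0r_neq0.
have ns1' : - s1 != 0 by rewrite oppr_eq0 lt0r_neq0.
have ns2 : s2 != 0 by rewrite lt0r_neq0.
have ns2' : - s2 != 0 by rewrite oppr_eq0 lt0r_neq0.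
have [u1 w1] := @unit_root R x1 s1 s1e ns1.
have [u1' w1'] := @unit_root R x1 (- s1) s1e' ns1'.
have [u2 w2] := @unit_root R x2 s2 s2e ns2.
have [u2' w2'] := @unit_root R x2 (- s2) s2e' ns2'.
have x2r : x2 = g \/ x2 = x1 \/ x2 = x2 by right; right.
have gr : g = g \/ g = x1 \/ g = x2 by left.
have be0 : (be%:C%C : R[i]) != 0 by rewrite fmorph_eq0 gt_eqF // (lt_trans ltr01 hb).
have bei0 : ((be^-1)%:C%C : R[i]) != 0 by rewrite fmorph_eq0 gt_eqF.
have wb : (be%:C%C : R[i]) + (be%:C%C)^-1 = g%:C%C by rewrite -fmorphV -rmorphD.
have wbi : ((be^-1)%:C%C : R[i]) + ((be^-1)%:C%C)^-1 = g%:C%C by rewrite -fmorphV -rmorphD invrK addrC.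
pose rs : seq R[i] := [:: be%:C%C; (be^-1)%:C%C; (x1 / 2 +i* s1)%C;
  (x1 / 2 +i* (- s1))%C; (x2 / 2 +i* s2)%C; (x2 / 2 +i* (- s2))%C].
have hall : all (root qC) rs.
  rewrite /rs /= !andbT; apply/and5P; split; last apply/andP; try split.
  - exact: (qroot _ g be0 gr wb).
  - exact: (qroot _ g bei0 gr wbi).
  - exact: (qroot _ x1 u1 x1r w1).
  - exact: (qroot _ x1 u1' x1r w1').
  - exact: (qroot _ x2 u2 x2r w2).
  - exact: (qroot _ x2 u2' x2r w2').
have hu : poly.uniq_roots rs.
  rewrite uniq_rootsE /rs /= !inE !negb_or !eq_complex /= -!andbA.
  repeat (apply/andP; split) => //; apply/negP => /andP[/eqP e1 /eqP e2]; lra.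
have hd := uniq_roots_dvdp hall hu.
have qC0 : qC != 0 by rewrite -size_poly_eq0 size_map_poly size_poly_eq0.
have := dvdp_leq qC0 hd; rewrite size_prod_XsubC /= size_map_poly => h7.
have := dvdp_leq Pq0 hqP; rewrite size_map_sextP => h7'.
by rewrite -dvdp_size_eqp // size_map_sextP eqn_leq h7 h7'.
Qed.

Lemma normC_real (R : rcfType) (x : R) : `|x%:C%C| = (`|x|)%:C%C.
Proof. by rewrite normc_def /= expr0n /= addr0 sqrtr_sqr. Qed.

Lemma one_C (R : rcfType) : (1 : R[i]) = (1 : R)%:C%C.
Proof. by []. Qed.

Theorem lemma4 (R : realType) (beta : R) (hbeta : 1 < beta) :
  well_posed_salem6 beta <->
  exists a b c : int,
    [/\ dominant_root (sextP a b c) beta,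
        2 - 2 * b < 2 * a + c,
        c < 2 * a
      & `|b + 2| < c - a].
Proof.
have b0 : 0 < beta by apply: lt_trans hbeta.
have bi : beta * beta^-1 = 1 by rewrite mulfV // gt_eqF.
have bi0 : 0 < beta^-1 by rewrite invr_gt0.
have bi1 : beta^-1 < 1 by nra.
have hg : 2 < beta + beta^-1 by nra.
split.
- move=> [hs [a [b [c [[_ _ hroot] [al1 [al2 [g [hgd r1 r2 r3 [i1 i2 i3 i4 i5]]]]]]]]]].
  exists a, b, c.
  have hQ : polyR_of R (traceQ a b c) = ('X - g%:P) * ('X - al1%:P) * ('X - al2%:P).
    apply: monic_cubic_fact; first exact: map_traceQ_monic.
      exact: size_map_traceQ.
    rewrite /= !inE !negb_or; repeat (apply/andP; split) => //.
    + by rewrite gt_eqF //; lra.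
    + by rewrite gt_eqF //; lra.
    + by rewrite lt_eqF //; lra.
    by rewrite /= r1 r2 r3.
  have [c1 c2 c3] := @conds_from_roots R a b c g al1 al2 hQ i1 i2 i3 i4 i5.
  split => //; split => // z hz.
  rewrite hgd in hQ.
  have := @P_roots R a b c beta al1 al2 hbeta ltac:(lra) ltac:(lra) ltac:(lra) ltac:(lra) hQ z hz.
  case=> [->|->|->].
  + by [].
  + by rewrite !normC_real lecR !gtr0_norm //; lra.
  + by rewrite normC_real one_C lecR gtr0_norm //; lra.
- move=> [a [b [c [[hroot _] c1 c2 c3]]]].
  move: c3; rewrite ltr_norml => /andP[c3 c4].
  set g := beta + beta^-1.
  have hg2 : 2 < g by [].
  have Ag : (polyR_of R (traceQ a b c)).[g] = 0.
    have bn0 : beta != 0 by rewrite gt_eqF.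
    have := hroot; rewrite /root /polyR_of sextP_eval //.
    by rewrite mulf_eq0 expf_eq0 /= (negbTE bn0) /= => /eqP.
  have k1 : ((2 + a + b - c)%:~R : R) < 0 by rewrite ltrz0; lia.
  have k2 : ((2 * a - c)%:~R : R) > 0 by rewrite ltr0z; lia.
  have k3 : ((a - b - c - 2)%:~R : R) < 0 by rewrite ltrz0; lia.
  move: k1 k2 k3; rewrite !(rmorphB, rmorphD, rmorphM) /= !rmorph1 => k1 k2 k3.
  set A := (a%:~R : R) in k1 k2 k3; set B := (b%:~R : R) in k1 k2 k3; set C := (c%:~R : R) in k1 k2 k3.
  have em : (polyR_of R (traceQ a b c)).[-1] = 1 + 1 + A + B - C.
    by rewrite traceQ_evalR; ring.
  have e0 : (polyR_of R (traceQ a b c)).[0] = (1 + 1) * A - C.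
    by rewrite traceQ_evalR; ring.
  have e1 : (polyR_of R (traceQ a b c)).[1] = A - B - C - (1 + 1).
    by rewrite traceQ_evalR; ring.
  have [al1 hal1 ral1] : {x | x \in `]-1, 0[ & root (polyR_of R (traceQ a b c)) x}.
    apply: poly_ivtoo; first lra.
    by rewrite em e0 nmulr_rlt0.
  have [al2 hal2 ral2] : {x | x \in `]0, 1[ & root (polyR_of R (traceQ a b c)) x}.
    apply: poly_ivtoo; first lra.
    by rewrite e1 e0 pmulr_rlt0.
  move: hal1 hal2; rewrite !in_itv /= => /andP[i1 i2] /andP[i3 i4].
  have hQ : polyR_of R (traceQ a b c) = ('X - g%:P) * ('X - al1%:P) * ('X - al2%:P).
    apply: monic_cubic_fact; first exact: map_traceQ_monic.
      exact: size_map_traceQ.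
    rewrite /= !inE !negb_or; repeat (apply/andP; split) => //.
    + by rewrite gt_eqF //; lra.
    + by rewrite gt_eqF //; lra.
    + by rewrite lt_eqF //; lra.
    by rewrite /= ral1 ral2 /root Ag eqxx.
  have hirr := @sextP_irr R a b c beta al1 al2 hbeta i1 i2 i3 i4 hQ.
  have hmin : is_min_poly_int (sextP a b c) beta by split => //; exact: monic_sextP.
  have hPr := @P_roots R a b c beta al1 al2 hbeta ltac:(lra) ltac:(lra) ltac:(lra) ltac:(lra) hQ.
  split; last first.
    exists a, b, c; split => //.
    exists al1, al2, g; split => //; by rewrite /root Ag eqxx.
  split => //; exists (sextP a b c); split => //.
    move=> z hz zb; case: (hPr z hz) => [hzb|->|->].
    + by rewrite hzb eqxx in zb.
    + by rewrite normC_real one_C lecR gtr0_norm //; lra.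
    + by [].
  have hx1a : -2 < al1 by lra.
  have hx1b : al1 < 2 by lra.
  have [s1e s1p] := @sqrt_data R al1 hx1a hx1b.
  set s1 := Num.sqrt _ in s1e s1p.
  have [u1 w1] := @unit_root R al1 s1 s1e (lt0r_neq0 s1p).
  exists (al1 / 2 +i* s1)%C; split.
    by apply: (@root_of_w R a b c _ al1 u1 w1); move/eqP: ral2 => _; apply/eqP.
  rewrite normc_def /= s1e.
  have -> : (al1 / 2) ^+ 2 + (1 - al1 ^+ 2 / 4) = 1 by field.
  by rewrite sqrtr1.
Qed.
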